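(* For every NBA $\mathcal A$, the relation $P(\sqsubset^{\mathrm{bw\text{-}di}},\subseteq^{\mathrm{di}})$ is good for pruning, i.e. $\mathcal L(\mathrm{Prune}(\mathcal A,P(\sqsubset^{\mathrm{bw\text{-}di}},\subseteq^{\mathrm{di}})))=\mathcal L(\mathcal A)$.
   Context: An NBA is $\mathcal A=(\Sigma,Q,I,F,\delta)$, $\delta\subseteq Q\times\Sigma\times Q$, assumed forward and backward complete; initial traces start in $I$, fair traces are infinite and visit $F$ infinitely often; the language is the set of infinite words with an initial fair trace. Backward direct simulation $\sqsubseteq^{\mathrm{bw\text{-}di}}$: in the game from $(p_0,q_0)$, at round $i$ from $(p_i,q_i)$ Spoiler picks $p_{i+1}\xrightarrow{\sigma_i}p_i$ and Duplicator answers $q_{i+1}\xrightarrow{\sigma_i}q_i$; Duplicator wins the infinite play if for all $i$, $p_i\in F\Rightarrow q_i\in F$ and $p_i\in I\Rightarrow q_i\in I$; $p\sqsubseteq^{\mathrm{bw\text{-}di}}q$ iff Duplicator has a winning strategy from $(p,q)$; $\sqsubset^{\mathrm{bw\text{-}di}}$ is its strict part ($p\sqsubseteq q$ and not $q\sqsubseteq p$). Direct trace inclusion: $p\subseteq^{\mathrm{di}}q$ iff for every infinite word $\sigma_0\sigma_1\cdots$ and infinite trace $p=p_0\xrightarrow{\sigma_0}p_1\cdots$ there is an infinite trace $q=q_0\xrightarrow{\sigma_0}q_1\cdots$ with $p_i\in F\Rightarrow q_i\in F$ for all $i$. $\mathrm{Prune}(\mathcal A,P)$ has transition set $\{t\in\delta:\nexists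 t'\in\delta,(t,t')\in P\}$; $P(R_b,R_f)=\{((p,\sigma,r),(p',\sigma,r'))\in\delta\times\delta:p\,R_b\,p',\ r\,R_f\,r'\}$. *)

(* Defs.v *)
From mathcomp Require Import all_boot.
Set Implicit Arguments. Unset Strict Implicit. Unset Printing Implicit Defensive.

(* An NBA A = (Sigma, Q, I, F, delta) with Sigma, Q finite types,
   I, F : Q -> Prop and delta : Q -> Sigma -> Q -> Prop
   (delta p a r  means  p --a--> r). *)
Record NBA (Sigma Q : finType) := mkNBA {
  init : Q -> Prop;
  fin : Q -> Prop;
  delta : Q -> Sigma -> Q -> Prop }.

Definition forward_complete (Sigma Q : finType) (A : NBA Sigma Q) : Prop :=
  forall (p : Q) (a : Sigma), exists r, delta A p a r.

Definition backward_complete (Sigma Q : finType) (A : NBA Sigma Q) : Prop :=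
  forall (r : Q) (a : Sigma), exists p, delta A p a r.

Definition is_trace (Sigma Q : finType) (A : NBA Sigma Q)
  (w : nat -> Sigma) (t : nat -> Q) : Prop :=
  forall i, delta A (t i) (w i) (t i.+1).

Definition accepts (Sigma Q : finType) (A : NBA Sigma Q) (w : nat -> Sigma) : Prop :=
  exists t : nat -> Q, init A (t 0) /\ is_trace A w t /\
    (forall n, exists m, n <= m /\ fin A (t m)).

(* A Spoiler play from p is a word s and
   states ps with ps 0 = p and ps (i+1) --s i--> ps i.  A Duplicator strategy
   maps the history of Spoiler's moves [(s 0, ps 1); ...; (s i, ps (i+1))]
   to Duplicator's answer q_{i+1}. *)
Definition dup_strategy (Sigma Q : finType) := seq (Sigma * Q) -> Q.

Definition history (Sigma Q : finType) (s : nat -> Sigma) (ps : nat -> Q) (n : nat)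
  : seq (Sigma * Q) := [seq (s j, ps j.+1) | j <- iota 0 n].

Definition dup_states (Sigma Q : finType) (f : dup_strategy Sigma Q) (q : Q)
  (s : nat -> Sigma) (ps : nat -> Q) (i : nat) : Q :=
  match i with 0 => q | i'.+1 => f (history s ps i'.+1) end.

Definition bw_di_winning (Sigma Q : finType) (A : NBA Sigma Q)
  (f : dup_strategy Sigma Q) (p q : Q) : Prop :=
  forall (s : nat -> Sigma) (ps : nat -> Q),
    ps 0 = p -> (forall i, delta A (ps i.+1) (s i) (ps i)) ->
    let qs := dup_states f q s ps in
    (forall i, delta A (qs i.+1) (s i) (qs i)) /\
    (forall i, (fin A (ps i) -> fin A (qs i)) /\ (init A (ps i) -> init A (qs i))).

Definition bw_di_sim (Sigma Q : finType) (A : NBA Sigma Q) (p q : Q) : Prop :=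
  exists f : dup_strategy Sigma Q, bw_di_winning A f p q.

Definition bw_di_strict (Sigma Q : finType) (A : NBA Sigma Q) (p q : Q) : Prop :=
  bw_di_sim A p q /\ ~ bw_di_sim A q p.

Definition di_trace_incl (Sigma Q : finType) (A : NBA Sigma Q) (p q : Q) : Prop :=
  forall (w : nat -> Sigma) (tp : nat -> Q), tp 0 = p -> is_trace A w tp ->
    exists tq : nat -> Q, tq 0 = q /\ is_trace A w tq /\
      (forall i, fin A (tp i) -> fin A (tq i)).

Definition trans_rel (Sigma Q : finType) := (Q * Sigma * Q) -> (Q * Sigma * Q) -> Prop.

Definition in_delta (Sigma Q : finType) (A : NBA Sigma Q) (t : Q * Sigma * Q) : Prop :=
  delta A t.1.1 t.1.2 t.2.

Definition P_rel (Sigma Q : finType) (A : NBA Sigma Q) (Rb Rf : Q -> Q -> Prop)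
  : trans_rel Sigma Q :=
  fun t t' => in_delta A t /\ in_delta A t' /\ t.1.2 = t'.1.2 /\
              Rb t.1.1 t'.1.1 /\ Rf t.2 t'.2.

Definition Prune (Sigma Q : finType) (A : NBA Sigma Q) (P : trans_rel Sigma Q)
  : NBA Sigma Q :=
  mkNBA (init A) (fin A)
    (fun p a r => delta A p a r /\ ~ exists t', in_delta A t' /\ P (p, a, r) t').

(* Main.v *)
Require Import Defs.
From mathcomp Require Import all_boot.
From Stdlib Require Import ClassicalEpsilon Classical.
Set Implicit Arguments. Unset Strict Implicit.

Definition is_sim (Sigma Q : finType) (A : NBA Sigma Q) (R : Q -> Q -> Prop) :=
  forall p q, R p q -> (fin A p -> fin A q) /\ (init A p -> init A q) /\
    forall p' a, delta A p' a p -> exists q', delta A q' a q /\ R p' q'.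

Definition bs (Sigma Q : finType) (A : NBA Sigma Q) (p q : Q) :=
  exists R, is_sim A R /\ R p q.

Lemma history_S (Sigma Q : finType) (s : nat -> Sigma) (ps : nat -> Q) n :
  history s ps n.+1 = rcons (history s ps n) (s n, ps n.+1).
Proof.
rewrite /history -addn1 iotaD map_cat cats1 /=. by rewrite add0n addn1.
Qed.

Lemma map_iota_shift (T : Type) (F : nat -> T) m n :
  map F (iota m.+1 n) = map (fun j => F j.+1) (iota m n).
Proof. elim: n m => [|n IH] m //=. by rewrite IH. Qed.

Lemma bs_refl (Sigma Q : finType) (A : NBA Sigma Q) p : bs A p p.
Proof.
exists (@eq Q); split=> //. move=> x y -> ; split=> //; split=> //.
move=> p' a H; by exists p'.
Qed.

Lemma bs_trans (Sigma Q : finType) (A : NBA Sigma Q) p q r :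
  bs A p q -> bs A q r -> bs A p r.
Proof.
move=> [R1 [H1 r1]] [R2 [H2 r2]].
exists (fun x z => exists y, R1 x y /\ R2 y z); split; last by exists q.
move=> x z [y [xy yz]].
have [f1 [i1 m1]] := H1 _ _ xy. have [f2 [i2 m2]] := H2 _ _ yz.
split; first by move=> /f1 /f2. split; first by move=> /i1 /i2.
move=> p' a d. have [y' [dy' R1y']] := m1 _ _ d.
have [z' [dz' R2z']] := m2 _ _ dy'. exists z'; split=> //. by exists y'.
Qed.

Lemma sim_to_bw (Sigma Q : finType) (A : NBA Sigma Q) p q :
  bs A p q -> bw_di_sim A p q.
Proof.
move=> [R [HR Rpq]].
pose step (pq : Q * Q) (x : Sigma * Q) : Q * Q :=
  (x.2, epsilon (inhabits q) (fun q' => R pq.1 pq.2 -> delta A x.2 x.1 pq.1 ->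
     delta A q' x.1 pq.2 /\ R x.2 q')).
have stepP : forall pq x, R pq.1 pq.2 -> delta A x.2 x.1 pq.1 ->
    delta A (step pq x).2 x.1 pq.2 /\ R x.2 (step pq x).2.
  move=> pq x h1 h2. rewrite /step /=.
  apply: (epsilon_spec (inhabits q) (fun q' => R pq.1 pq.2 -> delta A x.2 x.1 pq.1 ->
     delta A q' x.1 pq.2 /\ R x.2 q')) => //.
  have [_ [_ m]] := HR _ _ h1. have [q' [d r]] := m _ _ h2.
  by exists q' => _ _.
exists (fun H => (foldl step (p, q) H).2).
move=> s ps ps0 tr /=.
pose g i := foldl step (p, q) (history s ps i).
have gE : forall i, (g i).1 = ps i /\ R (ps i) (g i).2.
  elim=> [|i [IH1 IH2]]; first by rewrite /g /= ps0.
  rewrite /g history_S foldl_rcons -/(g i).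
  have := stepP (g i) (s i, ps i.+1). rewrite IH1 => /(_ IH2 (tr i)) [_ H].
  by split.
have qsE : forall i, dup_states (fun H => (foldl step (p, q) H).2) q s ps i = (g i).2.
  by case.
split.
- move=> i. have [e1 e2] := gE i.
  have gS : g i.+1 = step (g i) (s i, ps i.+1) by rewrite /g history_S foldl_rcons.
  rewrite (qsE i). change (delta A (g i.+1).2 (s i) (g i).2). rewrite gS.
  have := stepP (g i) (s i, ps i.+1). rewrite e1 => /(_ e2 (tr i)) [H _].
  exact H.
- move=> i. rewrite qsE. have [_ e2] := gE i. have [a [b _]] := HR _ _ e2. by [].
Qed.

Lemma bw_to_sim (Sigma Q : finType) (A : NBA Sigma Q) (a0 : Sigma) :
  backward_complete A -> is_sim A (bw_di_sim A).
Proof.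
move=> bc.
pose bp (r : Q) (a : Sigma) := epsilon (inhabits r) (fun x => delta A x a r).
have bpP : forall r a, delta A (bp r a) a r.
  move=> r a; apply: (epsilon_spec (inhabits r) (fun x => delta A x a r)); exact: bc.
pose mkps (p p' : Q) (a : Sigma) (j : nat) :=
  match j with 0 => p | j'.+1 => iter j' (fun r => bp r a) p' end.
have mkpsP : forall p p' a, delta A p' a p ->
    forall i, delta A (mkps p p' a i.+1) a (mkps p p' a i).
  move=> p p' a d [|i] //=; exact: bpP.
move=> p q [f Hf].
have [p1 d1] := bc p a0.
move: (Hf (fun _ => a0) (mkps p p1 a0) erefl (mkpsP p p1 a0 d1)) => /= [T1 T2].
have [F0 I0] := T2 0.
split=> //. split=> //.
move=> p' a d.
move: (Hf (fun _ => a) (mkps p p' a) erefl (mkpsP p p' a d)) => /= [U1 U2].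
exists (f [:: (a, p')]); split; first exact: (U1 0).
exists (fun H => f ((a, p') :: H)).
move=> s' ps' ps'0 tr'.
pose s'' j := match j with 0 => a | j'.+1 => s' j' end.
pose ps'' j := match j with 0 => p | j'.+1 => ps' j' end.
have tr'' : forall i, delta A (ps'' i.+1) (s'' i) (ps'' i).
  by case=> [|i] //=; rewrite ps'0.
have hE : forall n, history s'' ps'' n.+1 = (a, p') :: history s' ps' n.
  move=> n. by rewrite /history /= map_iota_shift /= ps'0.
move: (Hf s'' ps'' erefl tr'') => [V1 V2].
have dE : forall i, dup_states (fun H => f ((a, p') :: H)) (f [:: (a, p')]) s' ps' i
   = dup_states f q s'' ps'' i.+1.
  case=> [|i] /=; first by rewrite -(hE 0).
  by rewrite -hE.
split.
- move=> i. rewrite !dE. exact: (V1 i.+1).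
- move=> i. rewrite dE. exact: (V2 i.+1).
Qed.

Lemma bw_iff (Sigma Q : finType) (A : NBA Sigma Q) (a0 : Sigma) :
  backward_complete A -> forall p q, bw_di_sim A p q <-> bs A p q.
Proof.
move=> bc p q; split; last exact: sim_to_bw.
move=> h. exists (bw_di_sim A); split=> //. exact: bw_to_sim.
Qed.
From mathcomp Require Import zify.

Lemma back_path (Sigma Q : finType) (A : NBA Sigma Q) (R : Q -> Q -> Prop) :
  is_sim A R -> forall x y, R x y -> forall n (pth : nat -> Q) (s : nat -> Sigma),
  pth 0 = x -> (forall j, j < n -> delta A (pth j.+1) (s j) (pth j)) ->
  exists qth : nat -> Q, qth 0 = y /\ (forall j, j < n -> delta A (qth j.+1) (s j) (qth j))
    /\ (forall j, j <= n -> R (pth j) (qth j)).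
Proof.
move=> HR x y Rxy; elim=> [|n IH] pth s p0 tr.
  exists (fun _ => y); split=> //; split=> // j; rewrite leqn0 => /eqP ->; by rewrite p0.
have [qth [q0 [qtr qR]]] := IH pth s p0 (fun j jn => tr j (ltnW jn)).
have [_ [_ m]] := HR _ _ (qR n (leqnn n)).
have [q' [dq' Rq']] := m _ _ (tr n (ltnSn n)).
exists (fun j => if j == n.+1 then q' else qth j); split=> //=; split.
- move=> j jn. have -> : (j == n.+1) = false by apply/eqP; lia.
  case: (ltngtP j n) => [jlt|jgt|->]; last by rewrite eqxx.
  + have -> : (j.+1 == n.+1) = false by apply/eqP; lia. exact: qtr.
  + lia.
- move=> j jn. case: (eqVneq j n.+1) => [->|ne] //. apply: qR. lia.
Qed.

Definition PA (Sigma Q : finType) (A : NBA Sigma Q) :=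
  Prune A (P_rel A (bw_di_strict A) (di_trace_incl A)).

Definition inS (Sigma Q : finType) (A : NBA Sigma Q) (w : nat -> Sigma) (pi tau : nat -> Q) :=
  init A (tau 0) /\ is_trace A w tau /\ forall j, fin A (pi j) -> fin A (tau j).

Lemma replace (Sigma Q : finType) (A : NBA Sigma Q) (w : nat -> Sigma) :
  backward_complete A -> forall pi tau i p' r', inS A w pi tau ->
  bw_di_strict A (tau i) p' -> delta A p' (w i) r' -> di_trace_incl A (tau i.+1) r' ->
  exists tau', inS A w pi tau' /\ (forall j, j <= i -> bs A (tau j) (tau' j))
    /\ ~ bs A (tau' i) (tau i).
Proof.
move=> bc pi tau i p' r' [ti [ttr tdom]] [s1 s2] dpr inc.
have [R [HR Rip]] := (proj1 (bw_iff (w 0) bc _ _) s1).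
have btr : forall j, j < i -> delta A (tau (i - j.+1)) (w (i - j.+1)) (tau (i - j)).
  move=> j ji. have -> : i - j = (i - j.+1).+1 by lia. exact: ttr.
have [qth [q0 [qtr qR]]] := back_path HR Rip (pth := fun j => tau (i - j))
   (s := fun j => w (i - j.+1)) (n := i) (congr1 tau (subn0 i)) btr.
have ftr : is_trace A (fun k => w (i.+1 + k)) (fun k => tau (i.+1 + k)).
  move=> k /=. rewrite addnS. exact: ttr.
have [tq [tq0 [tqtr tqf]]] := inc (fun k => w (i.+1 + k)) (fun k => tau (i.+1 + k))
   (congr1 tau (addn0 i.+1)) ftr.
exists (fun j => if j <= i then qth (i - j) else tq (j - i.+1)).
split; [split; [|split]|split].
- rewrite /= subn0. have [_ [hi _]] := HR _ _ (qR i (leqnn i)).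
  apply: hi. by rewrite subnn.
- move=> j /=. case: (ltngtP j i) => [jlt|jgt|->].
  +     have := qtr (i - j.+1) ltac:(lia).
    have -> : i - (i - j.+1).+1 = j by lia.
    by have -> : (i - j.+1).+1 = i - j by lia.
  + have := tqtr (j - i.+1).
    have -> : i.+1 + (j - i.+1) = j by lia.
    by have -> : (j - i.+1).+1 = j.+1 - i.+1 by lia.
  + rewrite subnn subnn q0 tq0. exact: dpr.
- move=> j /= fj. case: ifP => ji.
  + have [hf _] := HR _ _ (qR (i - j) (leq_subr j i)).
    apply: hf. have -> : i - (i - j) = j by lia. exact: tdom.
  + apply: tqf => /=. have -> : i.+1 + (j - i.+1) = j by lia. exact: tdom.
- move=> j ji /=. rewrite ji. exists R; split=> //.
  have := qR (i - j) (leq_subr j i). by have -> : i - (i - j) = j by lia.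
- rewrite /= leqnn subnn q0 => h. apply: s2. exact: (proj2 (bw_iff (w 0) bc _ _) h).
Qed.

Fixpoint enc (B : nat) (v : nat -> nat) (k : nat) : nat :=
  match k with 0 => 0 | k'.+1 => enc B v k' * B + v k' end.

Lemma enc_eq B u v k : (forall j, j < k -> u j = v j) -> enc B u k = enc B v k.
Proof.
elim: k => [|k IH] h //=. rewrite IH; last by move=> j jk; apply: h; lia.
by rewrite h.
Qed.

Lemma enc_lt B u v k i : (forall j, u j < B) -> i < k ->
  (forall j, j < i -> u j = v j) -> u i < v i -> enc B u k < enc B v k.
Proof.
move=> hB; elim: k => [|k IH] //= ik hj hi.
case: (ltngtP i k) => [ilt|igt|ie].
- have := IH ilt hj hi. have := hB k. nia.
- lia.
- subst i. rewrite (enc_eq B (k:=k) (u:=u) (v:=v)) //. lia.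
Qed.

Definition asb (P : Prop) : bool := if excluded_middle_informative P then true else false.
Lemma asbP (P : Prop) : asb P <-> P.
Proof. rewrite /asb; case: excluded_middle_informative => //. Qed.

Definition Up (Sigma Q : finType) (A : NBA Sigma Q) (x : Q) : {set Q} :=
  [set q | asb (bs A x q)].

Lemma Up_sub (Sigma Q : finType) (A : NBA Sigma Q) x y :
  bs A x y -> Up A y \subset Up A x.
Proof.
move=> h; apply/subsetP => z; rewrite !inE => /asbP h2; apply/asbP.
exact: bs_trans h h2.
Qed.

Lemma Up_proper (Sigma Q : finType) (A : NBA Sigma Q) x y :
  bs A x y -> ~ bs A y x -> Up A y \proper Up A x.
Proof.
move=> h nh; apply/properP; split; first exact: Up_sub.
exists x; rewrite inE; first by apply/asbP; exact: bs_refl.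
by apply/negP => /asbP.
Qed.

Lemma measure_lt (Sigma Q : finType) (A : NBA Sigma Q) (tau tau' : nat -> Q) i k :
  i < k -> (forall j, j <= i -> bs A (tau j) (tau' j)) -> ~ bs A (tau' i) (tau i) ->
  enc #|Q|.+1 (fun j => #|Up A (tau' j)|) k < enc #|Q|.+1 (fun j => #|Up A (tau j)|) k.
Proof.
move=> ik hle hn.
set c' := fun j => #|Up A (tau' j)|. set c := fun j => #|Up A (tau j)|.
have cle : forall j, j <= i -> c' j <= c j.
  move=> j ji; apply: subset_leq_card; exact: Up_sub (hle j ji).
have clt : c' i < c i by apply: proper_card; apply: Up_proper => //; exact: hle.
have exP : exists n, (n <= i) && (c' n < c n) by exists i; rewrite leqnn clt.
case: (ex_minnP exP) => i0 /andP [i0i lt0] hmin.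
apply: (enc_lt (i := i0)) => //.
- move=> j; rewrite /c' ltnS; exact: max_card.
- lia.
- move=> j ji0. have jle : j <= i by lia.
  have := cle j jle. case: (ltnP (c' j) (c j)) => [hl|hg] hle2; last lia.
  have := hmin j; rewrite jle hl => /(_ isT). lia.
Qed.

Lemma exists_good (Sigma Q : finType) (A : NBA Sigma Q) (w : nat -> Sigma) :
  backward_complete A -> forall k pi tau, inS A w pi tau ->
  exists tau', inS A w pi tau' /\ forall j, j < k -> delta (PA A) (tau' j) (w j) (tau' j.+1).
Proof.
move=> bc k pi.
suff: forall n tau, inS A w pi tau -> enc #|Q|.+1 (fun j => #|Up A (tau j)|) k <= n ->
  exists tau', inS A w pi tau' /\ forall j, j < k -> delta (PA A) (tau' j) (w j) (tau' j.+1).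
  by move=> h tau ht; apply: (h _ tau ht (leqnn _)).
elim=> [|n IH] tau ht hn;
  (case: (classic (forall j, j < k -> delta (PA A) (tau j) (w j) (tau j.+1))) => hall;
    first by exists tau);
  (have [j hj] : exists j, ~ (j < k -> delta (PA A) (tau j) (w j) (tau j.+1))
    by apply: not_all_ex_not);
  (have [jk nd] : j < k /\ ~ delta (PA A) (tau j) (w j) (tau j.+1)
    by split; [apply: NNPP => h; apply: hj => /h | move=> h; apply: hj]);
  (have [t' [dt' [_ [_ [ea [st inc]]]]]] : exists t', in_delta A t' /\
     P_rel A (bw_di_strict A) (di_trace_incl A) (tau j, w j, tau j.+1) t'
    by apply: NNPP => h; apply: nd; split => //; case: ht => [_ [tr _]]; exact: tr);
  case: t' dt' ea st inc => [[p' a'] r'] /= dt' ea st inc; subst a';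
  have [tau' [ht' [hle hn']]] := replace bc ht st dt' inc;
  have := measure_lt jk hle hn'.
- lia.
- move=> hlt. apply: (IH tau' ht'). lia.
Qed.

Definition ext (Sigma Q : finType) (A : NBA Sigma Q) (w : nat -> Sigma) (pi : nat -> Q)
  (n : nat) (q : nat -> Q) :=
  init A (q 0) /\ (forall j, j < n -> delta (PA A) (q j) (w j) (q j.+1)) /\
  (forall j, j <= n -> fin A (pi j) -> fin A (q j)).

Lemma ext_mono (Sigma Q : finType) (A : NBA Sigma Q) w pi m n q :
  m <= n -> ext A w pi n q -> ext A w pi m q.
Proof.
move=> mn [h1 [h2 h3]]; split=> //; split=> j jm; [apply: h2 | apply: h3]; lia.
Qed.

Lemma ext_ext (Sigma Q : finType) (A : NBA Sigma Q) w pi n q q' :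
  (forall j, j <= n -> q j = q' j) -> ext A w pi n q -> ext A w pi n q'.
Proof.
move=> e [h1 [h2 h3]]; split; first by rewrite -e.
split=> j jn; rewrite -!e //; try lia; [exact: h2 | exact: h3].
Qed.

Definition upd (Q : Type) (q : nat -> Q) n (x : Q) := fun j => if j == n then x else q j.

Definition goodp (Sigma Q : finType) (A : NBA Sigma Q) w pi n (q : nat -> Q) :=
  forall m, exists q', ext A w pi m q' /\ forall j, j < n -> q' j = q j.

Lemma good_step (Sigma Q : finType) (A : NBA Sigma Q) w pi n q :
  goodp A w pi n q -> exists x, goodp A w pi n.+1 (upd q n x).
Proof.
move=> g. apply: NNPP => nx.
have hx : forall x, exists m, ~ exists q', ext A w pi m q' /\
    forall j, j < n.+1 -> q' j = upd q n x j.
  move=> x; apply: NNPP => h; apply: nx; exists x => m; apply: NNPP => h2; apply: h.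
  by exists m.
pose mx x := epsilon (inhabits 0) (fun m => ~ exists q', ext A w pi m q' /\
    forall j, j < n.+1 -> q' j = upd q n x j).
have mxP : forall x, ~ exists q', ext A w pi (mx x) q' /\
    forall j, j < n.+1 -> q' j = upd q n x j.
  move=> x; exact: (epsilon_spec (inhabits 0) (fun m => ~ exists q', ext A w pi m q' /\
    forall j, j < n.+1 -> q' j = upd q n x j) (hx x)).
have [q' [e ag]] := g (\max_x mx x).
apply: (mxP (q' n)). exists q'; split.
  apply: ext_mono e. exact: leq_bigmax.
move=> j jn. rewrite /upd. case: eqP => [->|ne] //. apply: ag. lia.
Qed.

Lemma konig (Sigma Q : finType) (A : NBA Sigma Q) w pi (q0 : Q) :
  (forall n, exists q, ext A w pi n q) -> exists L, forall n, ext A w pi n L.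
Proof.
move=> h.
pose nxt n (q : nat -> Q) := upd q n (epsilon (inhabits q0)
   (fun x => goodp A w pi n q -> goodp A w pi n.+1 (upd q n x)) ).
have nxtP : forall n q, goodp A w pi n q -> goodp A w pi n.+1 (nxt n q).
  move=> n q g. rewrite /nxt.
  have := epsilon_spec (inhabits q0)
     (fun x => goodp A w pi n q -> goodp A w pi n.+1 (upd q n x)).
  apply => //. have [x gx] := good_step g. by exists x => _.
pose F := fix F n := match n with 0 => fun _ : nat => q0 | n'.+1 => nxt n' (F n') end.
have FG : forall n, goodp A w pi n (F n).
  elim=> [|n IH]; last exact: nxtP.
  move=> m; have [q hq] := h m; by exists q.
have Fst : forall j n, j < n -> F n j = F j.+1 j.
  move=> j; elim=> [|n IH] //= jn. case: (eqVneq j n) => [->|ne] //.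
  rewrite /nxt /upd (negbTE ne) IH //. lia.
exists (fun j => F j.+1 j) => n.
have [q' [e ag]] := FG n.+1 n.
apply: ext_ext e => j jn. rewrite ag; last lia. apply: Fst; lia.
Qed.

Theorem theorem5p3 (Sigma Q : finType) (A : NBA Sigma Q) :
  forward_complete A -> backward_complete A ->
  forall w : nat -> Sigma,
    accepts (Prune A (P_rel A (bw_di_strict A) (di_trace_incl A))) w <-> accepts A w.
Proof.
move=> _ bc w; split.
  move=> [t [t0 [ttr tf]]]; exists t; split=> //; split=> //.
  by move=> i; have [] := ttr i.
move=> [pi [pi0 [pitr pif]]].
have hS : inS A w pi pi by split=> //; split.
have hext : forall n, exists q, ext A w pi n q.
  move=> n; have [tau [[h1 [h2 h3]] h4]] := exists_good bc n hS.
  exists tau; split=> //; split=> // j _; exact: h3.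
have [L hL] := konig (pi 0) hext.
exists L; split; first by have [] := hL 0.
split.
  move=> j; have [_ [h _]] := hL j.+1; exact: h.
move=> n; have [m [nm fm]] := pif n; exists m; split=> //.
have [_ [_ h]] := hL m; exact: h.
Qed.
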